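(* Consider a run of Algorithm 1 (described in the context) against an adversary making at most $C$ corruptions. The total absolute loss $\sum |f(x_t)-q_t|$ over all rounds $t$ lying in correcting intervals is at most $L\cdot O(C)$, with an absolute constant.
   Context: Problem. Fix $L>0$ and $T\ge 2$. An adversary fixes an unknown $L$-Lipschitz $f:[0,1]\to[0,L]$. In each round $t=1,\dots,T$: the adversary chooses $x_t\in[0,1]$; the learner observes $x_t$ and guesses $q_t$; the adversary observes $q_t$ and sends $\sigma_t\in\{0,1\}$, equal to $\sigma(q_t-f(x_t))$ in uncorrupted rounds and $1-\sigma(q_t-f(x_t))$ in corrupted rounds, where $\sigma(u)=1$ if $u>0$ and $0$ if $u\le 0$; the adversary chooses adaptively which rounds to corrupt, at most $C$ in total ($C$ unknown to the learner). The absolute loss of round $t$ is $|f(x_t)-q_t|$. $\mathtt{len}(I)$ is the length of an interval $I$. $\mathtt{MidpointQuery}(I,Y)$, $Y=[a,b]$: guess $q=(a+b)/2$; if $\sigma_t=1$ return $Y\cap[0,q+L\,\mathtt{len}(I)]$, if $\sigma_t=0$ return $Y\cap[q-L\,\mathtt{len}(I),L]$. Algorithm 1. Maintain a partition of $[0,1]$ into intervals; each $I_j$ carries a checking interval $S_j$, range $Y_j$, and a ''dubious'' flag (initially unset). Initially: $8$ intervals of length $1/8$ (the root intervals), each with $S_j=Y_j=[0,L]$. In round $t$, with $I_j$ the partition interval containing $x_t$: (i) if some endpoint of $S_j$ has not been guessed in a round whose context lay in $I_j$, guess such an endpoint; if the guess was $\min(S_j)$ with $\sigma_t=1$ or $\max(S_j)$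 with $\sigma_t=0$, mark $I_j$ dubious; once both endpoints have been queried, set $Y_j=[0,L]$ if dubious and otherwise $Y_j=[\min(S_j)-L\,\mathtt{len}(I_j),\max(S_j)+L\,\mathtt{len}(I_j)]\cap[0,L]$. (ii) Otherwise set $Y_j:=\mathtt{MidpointQuery}(I_j,Y_j)$; if then $\mathtt{len}(Y_j)<\max(4L\,\mathtt{len}(I_j),4L/T)$, bisect $I_j$ into its two halves (its children, of which $I_j$ is the parent), which replace it, each with checking interval equal to the current $Y_j$ (endpoints unqueried, not dubious). Interval types. Say a round $t$ lies in $I_j$ if $I_j$ is the partition interval containing $x_t$ at round $t$. An interval $I_j$ is corrupted if some round lying in $I_j$ has a corrupted signal; it is correcting if its parent is corrupted and every round lying in $I_j$ is uncorrupted. *)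

(* Defs.v *)
From Stdlib Require Import Reals List Bool Arith.
Open Scope R_scope.

Definition Rleb (a b : R) : bool := if Rle_dec a b then true else false.
Definition Rltb (a b : R) : bool := if Rlt_dec a b then true else false.
Definition Reqb (a b : R) : bool := if Req_EM_T a b then true else false.

(* sigma(u) = 1 if u > 0, 0 if u <= 0 ; 1 is encoded as true *)
Definition sgn01 (u : R) : bool := Rltb 0 u.

(* A partition interval of Algorithm 1.  It is the dyadic interval
   [idx / 2^dep, (idx+1) / 2^dep]; it carries a checking interval
   S = [Slo, Shi], a range Y = [Ylo, Yhi], flags recording whether
   min(S) / max(S) have been guessed in a round lying in it, and the
   "dubious" flag. *)
Record ival := mkI {
  dep : nat; idx : nat;
  Slo : R; Shi : R;
  Ylo : R; Yhi : R;
  qlo : bool; qhi : bool;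
  dub : bool }.

Definition key (J0 : ival) : nat * nat := (dep J0, idx J0).
Definition key_eqb (a b : nat * nat) : bool :=
  Nat.eqb (fst a) (fst b) && Nat.eqb (snd a) (snd b).

Definition ilen (J0 : ival) : R := / (2 ^ dep J0).
Definition ileft (J0 : ival) : R := INR (idx J0) * ilen J0.

(* The partition of [0,1] consists of half-open intervals [a,b),
   the last one [a,1] being closed. *)
Definition icontains (J0 : ival) (u : R) : bool :=
  (Rleb (ileft J0) u && Rltb u (ileft J0 + ilen J0))
  || (Reqb u 1 && Reqb (ileft J0 + ilen J0) 1).

Definition init_state (L : R) : list ival :=
  map (fun i => mkI 3 i 0 L 0 L false false false) (seq 0 8).

Definition replace_ival (k : nat * nat) (new : list ival) (st : list ival)
  : list ival :=
  flat_map (fun J => if key_eqb (key J) k then new else J :: nil) st.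

(* Processing round with context u, corruption bit c, for the unknown f.
   Returns (guess q_t, key of the interval the round lies in, new state). *)
Definition process (L : R) (T : nat) (f : R -> R) (J0 : ival) (u : R) (c : bool)
  (st : list ival) : R * (nat * nat) * list ival :=
  let len := ilen J0 in
  let signal q := xorb (sgn01 (q - f u)) c in
  if negb (qlo J0) || negb (qhi J0) then
    (* step (i): checking phase *)
    let '(q, lo', hi', d') :=
      if negb (qlo J0) then
        let q := Slo J0 in (q, true, qhi J0, dub J0 || signal q)
      else
        let q := Shi J0 in (q, qlo J0, true, dub J0 || negb (signal q)) in
    let '(yl, yh) :=
      if lo' && hi' then
        (if d' then (0, L)
         else (Rmax (Slo J0 - L * len) 0, Rmin (Shi J0 + L * len) L))
      else (Ylo J0, Yhi J0) in
    let J0' := mkI (dep J0) (idx J0) (Slo J0) (Shi J0) yl yh lo' hi' d' in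
    (q, key J0, replace_ival (key J0) (J0' :: nil) st)
  else
    (* step (ii): MidpointQuery, then possibly bisect *)
    let q := (Ylo J0 + Yhi J0) / 2 in
    let '(yl, yh) :=
      if signal q then (Rmax (Ylo J0) 0, Rmin (Yhi J0) (q + L * len))
      else (Rmax (Ylo J0) (q - L * len), Rmin (Yhi J0) L) in
    if Rltb (yh - yl) (Rmax (4 * L * len) (4 * L / INR T)) then
      let c1 := mkI (S (dep J0)) (2 * idx J0) yl yh yl yh false false false in
      let c2 := mkI (S (dep J0)) (S (2 * idx J0)) yl yh yl yh false false false in
      (q, key J0, replace_ival (key J0) (c1 :: c2 :: nil) st)
    else
      let J0' := mkI (dep J0) (idx J0) (Slo J0) (Shi J0) yl yh true true (dub J0) in
      (q, key J0, replace_ival (key J0) (J0' :: nil) st).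

Definition round (L : R) (T : nat) (f : R -> R) (st : list ival) (u : R)
  (c : bool) : R * (nat * nat) * list ival :=
  match find (fun J0 => icontains J0 u) st with
  | Some J0 => process L T f J0 u c st
  | None => (0, (0%nat, 0%nat), st)  (* unreachable: st partitions [0,1] *)
  end.

(* State after n rounds; round t (t >= 1) uses context x t and
   corruption indicator corr t. *)
Fixpoint run (L : R) (T : nat) (f : R -> R) (x : nat -> R)
  (corr : nat -> bool) (n : nat) : list ival :=
  match n with
  | O => init_state L
  | S m => let '(_, _, st') := round L T f (run L T f x corr m) (x n) (corr n)
           in st'
  end.

Definition guess L T f x corr (t : nat) : R :=
  let '(q, _, _) := round L T f (run L T f x corr (t - 1)) (x t) (corr t) in q.

Definition lies_in L T f x corr (t : nat) : nat * nat :=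
  let '(_, k, _) := round L T f (run L T f x corr (t - 1)) (x t) (corr t) in k.

Definition rounds (T : nat) : list nat := seq 1 T.

Definition corrupted L T f x corr (k : nat * nat) : bool :=
  existsb (fun t => key_eqb (lies_in L T f x corr t) k && corr t) (rounds T).

(* J0 = (k,i) is correcting: it is not a root interval (so it has a parent
   (k-1, i/2)), its parent is corrupted, and all rounds lying in it are
   uncorrupted. *)
Definition correcting L T f x corr (k : nat * nat) : bool :=
  Nat.ltb 3 (fst k)
  && corrupted L T f x corr (pred (fst k), Nat.div2 (snd k))
  && forallb (fun t => negb (key_eqb (lies_in L T f x corr t) k) || negb (corr t))
       (rounds T).

Definition num_corruptions (T : nat) (corr : nat -> bool) : nat :=
  length (filter corr (rounds T)).

Definition correcting_loss L T f x corr : R :=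
  fold_right Rplus 0
    (map (fun t => if correcting L T f x corr (lies_in L T f x corr t)
                   then Rabs (f (x t) - guess L T f x corr t) else 0)
         (rounds T)).

(* Main.v *)
Require Import Defs.
From Stdlib Require Import Reals List Bool Arith Lia Lra.
Open Scope R_scope.

Definition bounded (L : R) (J : ival) : Prop :=
  0 <= Slo J <= L /\ 0 <= Shi J <= L /\ 0 <= Ylo J <= L /\ 0 <= Yhi J <= L.

Definition inI (J : ival) (u : R) : Prop := ileft J <= u <= ileft J + ilen J.

Definition FI (f : R -> R) (J : ival) : Prop :=
  (qlo J = true -> dub J = false -> exists u, 0 <= u <= 1 /\ inI J u /\ Slo J <= f u) /\
  (qhi J = true -> dub J = false -> exists u, 0 <= u <= 1 /\ inI J u /\ f u < Shi J) /\
  (qlo J = true -> qhi J = true -> forall u, 0 <= u <= 1 -> inI J u -> Ylo J <= f u <= Yhi J).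

Definition phi (L : R) (J : ival) : R :=
  (if qlo J then 0 else L) + (if qhi J then 0 else L) +
  (if qlo J && qhi J then 4 * Rmax (Yhi J - Ylo J) (4 * L * ilen J) else 4 * L).

Lemma ilen_pos J : 0 < ilen J.
Proof. unfold ilen. apply Rinv_0_lt_compat, pow_lt; lra. Qed.

Lemma ilen_small J : (3 <= dep J)%nat -> ilen J <= /8.
Proof.
  intros H. unfold ilen. apply Rinv_le_contravar. lra.
  replace 8 with (2 ^ 3) by (simpl; lra). apply Rle_pow; auto; lra.
Qed.

Lemma icontains_inI J u : icontains J u = true -> inI J u.
Proof.
  unfold icontains, inI, Rleb, Rltb, Reqb. pose proof (ilen_pos J).
  destruct (Rle_dec _ _), (Rlt_dec _ _), (Req_EM_T u 1), (Req_EM_T (ileft J + ilen J) 1);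
  simpl; intros; try discriminate; lra.
Qed.

Section F.
Variables (L : R) (f : R -> R).
Hypothesis HL : 0 < L.
Hypothesis Hf : forall u, 0 <= u <= 1 -> 0 <= f u <= L.
Hypothesis Hlip : forall u v, 0 <= u <= 1 -> 0 <= v <= 1 -> Rabs (f u - f v) <= L * Rabs (u - v).

Lemma lip_in J u v : 0 <= u <= 1 -> 0 <= v <= 1 -> inI J u -> inI J v ->
  f u - L * ilen J <= f v <= f u + L * ilen J.
Proof.
  intros Hu Hv Iu Iv. unfold inI in *.
  assert (Rabs (v - u) <= ilen J) by (unfold Rabs; destruct Rcase_abs; lra).
  assert (H2 : Rabs (f v - f u) <= L * ilen J).
  { eapply Rle_trans. apply Hlip; auto. apply Rmult_le_compat_l; lra. }
  unfold Rabs in H2; destruct Rcase_abs in H2; lra.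
Qed.

Lemma sgn01_true a : sgn01 a = true -> 0 < a.
Proof. unfold sgn01, Rltb. destruct Rlt_dec; auto; discriminate. Qed.
Lemma sgn01_false a : sgn01 a = false -> a <= 0.
Proof. unfold sgn01, Rltb. destruct Rlt_dec; intros; try discriminate; lra. Qed.

Ltac rmm := unfold Rmax, Rmin in *; repeat (destruct Rle_dec as [?|?%Rnot_le_lt]); try lra.

Lemma process_spec T J0 u c st q k st' :
  process L T f J0 u c st = (q, k, st') ->
  (3 <= dep J0)%nat -> bounded L J0 ->
  k = key J0 /\ exists new, st' = replace_ival (key J0) new st /\ Forall (bounded L) new /\
  ( (exists J', new = J' :: nil /\ key J' = key J0 /\
       (c = false -> FI f J0 -> 0 <= u <= 1 -> inI J0 u ->
         FI f J' /\ Rabs (f u - q) + phi L J' <= phi L J0))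
  \/ (exists c1 c2, new = c1 :: c2 :: nil /\ key c1 = (S (dep J0), 2 * idx J0)%nat /\
       key c2 = (S (dep J0), S (2 * idx J0)) /\ qlo c1 = false /\ qhi c1 = false /\
       qlo c2 = false /\ qhi c2 = false /\
       (c = false -> FI f J0 -> 0 <= u <= 1 -> inI J0 u -> Rabs (f u - q) <= phi L J0))).
Proof.
  intros E Hd Hb. pose proof (ilen_pos J0) as Hl0. pose proof (ilen_small J0 Hd) as Hl8.
  destruct Hb as (B1 & B2 & B3 & B4).
  unfold process in E.
  assert (Hm : 4 * L * ilen J0 <= L / 2) by nra.
  assert (Hp : 0 < L * ilen J0) by nra.
  destruct (qlo J0) eqn:Elo, (qhi J0) eqn:Ehi; simpl in E.
  -
    set (qm := (Ylo J0 + Yhi J0) / 2) in *.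
    remember (if xorb (sgn01 (qm - f u)) c then
      (Rmax (Ylo J0) 0, Rmin (Yhi J0) (qm + L * ilen J0))
      else (Rmax (Ylo J0) (qm - L * ilen J0), Rmin (Yhi J0) L)) as P eqn:EP.
    destruct P as [yl yh].
    assert (HB : 0 <= yl <= L /\ 0 <= yh <= L).
    { clear E. unfold qm in EP. destruct xorb in EP; inversion EP; subst; rmm. }
    assert (HC : c = false -> FI f J0 -> 0 <= u <= 1 -> inI J0 u ->
      Ylo J0 <= f u <= Yhi J0 /\ yh - yl <= (Yhi J0 - Ylo J0) / 2 + L * ilen J0 /\
      (forall u', 0 <= u' <= 1 -> inI J0 u' -> yl <= f u' <= yh)).
    { clear E. intros -> (_ & _ & F3) Hu Iu. specialize (F3 Elo Ehi).
      pose proof (F3 u Hu Iu) as Fu.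
      destruct (sgn01 (qm - f u)) eqn:Es; simpl in EP; inversion EP; subst yl yh.
      - apply sgn01_true in Es. split; [lra|split]. unfold qm in *; rmm.
        intros u' Hu' Iu'. pose proof (F3 u' Hu' Iu'). pose proof (lip_in J0 u u' Hu Hu' Iu Iu').
        unfold qm in *; rmm.
      - apply sgn01_false in Es. split; [lra|split]. unfold qm in *; rmm.
        intros u' Hu' Iu'. pose proof (F3 u' Hu' Iu'). pose proof (lip_in J0 u u' Hu Hu' Iu Iu').
        unfold qm in *; rmm. }
    destruct (Rltb (yh - yl) (Rmax (4 * L * ilen J0) (4 * L / INR T))) eqn:Eb;
      inversion E; subst q k st'; (split; [reflexivity|]); (eexists; split; [reflexivity|]).
    + split. { repeat (constructor; [unfold bounded; simpl; lra|]); constructor. }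
      right. do 2 eexists. split; [reflexivity|]. do 6 (split; [reflexivity|]).
      intros Hc FJ Hu Iu. destruct (HC Hc FJ Hu Iu) as (Fu & Hy & _).
      assert (Hls : Rabs (f u - qm) <= (Yhi J0 - Ylo J0) / 2)
        by (unfold qm; unfold Rabs; destruct Rcase_abs; lra).
      pose proof (Rmax_l (Yhi J0 - Ylo J0) (4 * L * ilen J0)).
      unfold phi; rewrite Elo, Ehi; simpl. lra.
    + split. { repeat (constructor; [unfold bounded; simpl; lra|]); constructor. }
      left. eexists. split; [reflexivity|]. split; [reflexivity|].
      intros Hc FJ Hu Iu. destruct (HC Hc FJ Hu Iu) as (Fu & Hy & Hall).
      assert (Hge : 4 * L * ilen J0 <= yh - yl).
      { unfold Rltb in Eb. destruct Rlt_dec in Eb; try discriminate. rmm. }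
      split.
      * destruct FJ as (F1 & F2 & _). split; [|split]; simpl.
        -- intros _ Hdb. exact (F1 Elo Hdb).
        -- intros _ Hdb. exact (F2 Ehi Hdb).
        -- intros _ _ u' Hu' Iu'. exact (Hall u' Hu' Iu').
      * unfold phi; rewrite Elo, Ehi; simpl.
        change (ilen {| dep := dep J0; idx := idx J0; Slo := Slo J0; Shi := Shi J0;
          Ylo := yl; Yhi := yh; qlo := true; qhi := true; dub := dub J0 |}) with (ilen J0).
        assert (Hls : Rabs (f u - qm) <= (Yhi J0 - Ylo J0) / 2)
          by (unfold qm; unfold Rabs; destruct Rcase_abs; lra).
        rewrite (Rmax_left (yh - yl)) by lra.
        clear - Hls Hy Fu Hp.
        set (a := Yhi J0 - Ylo J0) in *. set (m := L * ilen J0) in *.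
        replace (4 * L * ilen J0) with (4 * m) by (unfold m; ring).
        destruct (Rle_dec a (4 * m)).
        -- rewrite Rmax_right by lra. lra.
        -- rewrite Rmax_left by lra. lra.
  -
    set (dd := dub J0 || negb (xorb (sgn01 (Shi J0 - f u)) c)) in *.
    remember (if dd then (0, L) else (Rmax (Slo J0 - L * ilen J0) 0, Rmin (Shi J0 + L * ilen J0) L)) as P eqn:EP.
    destruct P as [yl yh].
    assert (HB : 0 <= yl <= L /\ 0 <= yh <= L).
    { clear E. destruct dd in EP; inversion EP; subst; rmm. }
    inversion E; subst q k st'. split; [reflexivity|]. eexists; split; [reflexivity|].
    split. { repeat (constructor; [unfold bounded; simpl; lra|]); constructor. }
    left. eexists. split; [reflexivity|]. split; [reflexivity|].
    intros -> FJ Hu Iu. destruct FJ as (F1 & F2 & F3).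
    split.
    + split; [|split]; simpl.
      * intros _ Hdb. unfold dd in Hdb. apply orb_false_elim in Hdb as [Hdb _]. exact (F1 Elo Hdb).
      * intros _ Hdb. unfold dd in Hdb. apply orb_false_elim in Hdb as [_ Hdb]. rewrite xorb_false_r in Hdb.
        apply negb_false_iff, sgn01_true in Hdb. exists u. repeat split; try lra; apply Iu.
      * intros _ _ u' Hu' Iu'. destruct dd eqn:Edd; inversion EP; subst yl yh.
        -- apply Hf; auto.
        -- unfold dd in Edd. apply orb_false_elim in Edd as [Hdb Hs]. rewrite xorb_false_r in Hs.
           apply negb_false_iff, sgn01_true in Hs.
           destruct (F1 Elo Hdb) as (u0 & Hu0 & Iu0 & H0).
           pose proof (lip_in J0 u0 u' Hu0 Hu' Iu0 Iu'). pose proof (lip_in J0 u u' Hu Hu' Iu Iu').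
           pose proof (Hf u' Hu'). rmm.
    + unfold phi; rewrite Elo, Ehi; simpl.
      change (ilen {| dep := dep J0; idx := idx J0; Slo := Slo J0; Shi := Shi J0;
          Ylo := yl; Yhi := yh; qlo := true; qhi := true; dub := dd |}) with (ilen J0).
      pose proof (Hf u Hu). rmm; unfold Rabs; destruct Rcase_abs; lra.
  -
    set (dd := dub J0 || xorb (sgn01 (Slo J0 - f u)) c) in *.
    remember (if dd then (0, L) else (Rmax (Slo J0 - L * ilen J0) 0, Rmin (Shi J0 + L * ilen J0) L)) as P eqn:EP.
    destruct P as [yl yh].
    assert (HB : 0 <= yl <= L /\ 0 <= yh <= L).
    { clear E. destruct dd in EP; inversion EP; subst; rmm. }
    inversion E; subst q k st'. split; [reflexivity|]. eexists; split; [reflexivity|].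
    split. { repeat (constructor; [unfold bounded; simpl; lra|]); constructor. }
    left. eexists. split; [reflexivity|]. split; [reflexivity|].
    intros -> FJ Hu Iu. destruct FJ as (F1 & F2 & F3).
    split.
    + split; [|split]; simpl.
      * intros _ Hdb. unfold dd in Hdb. apply orb_false_elim in Hdb as [_ Hdb]. rewrite xorb_false_r in Hdb.
        apply sgn01_false in Hdb. exists u. repeat split; try lra; apply Iu.
      * intros _ Hdb. unfold dd in Hdb. apply orb_false_elim in Hdb as [Hdb _]. exact (F2 Ehi Hdb).
      * intros _ _ u' Hu' Iu'. destruct dd eqn:Edd; inversion EP; subst yl yh.
        -- apply Hf; auto.
        -- unfold dd in Edd. apply orb_false_elim in Edd as [Hdb Hs]. rewrite xorb_false_r in Hs.
           apply sgn01_false in Hs.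
           destruct (F2 Ehi Hdb) as (u0 & Hu0 & Iu0 & H0).
           pose proof (lip_in J0 u0 u' Hu0 Hu' Iu0 Iu'). pose proof (lip_in J0 u u' Hu Hu' Iu Iu').
           pose proof (Hf u' Hu'). rmm.
    + unfold phi; rewrite Elo, Ehi; simpl.
      change (ilen {| dep := dep J0; idx := idx J0; Slo := Slo J0; Shi := Shi J0;
          Ylo := yl; Yhi := yh; qlo := true; qhi := true; dub := dd |}) with (ilen J0).
      pose proof (Hf u Hu). rmm; unfold Rabs; destruct Rcase_abs; lra.
  -
    inversion E; subst q k st'. split; [reflexivity|]. eexists; split; [reflexivity|].
    split. { repeat (constructor; [unfold bounded; simpl; lra|]); constructor. }
    left. eexists. split; [reflexivity|]. split; [reflexivity|].
    intros -> FJ Hu Iu. destruct FJ as (F1 & F2 & F3).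
    split.
    + split; [|split]; simpl.
      * intros _ Hdb. apply orb_false_elim in Hdb as [_ Hdb]. rewrite xorb_false_r in Hdb.
        apply sgn01_false in Hdb. exists u. repeat split; try lra; apply Iu.
      * intros H; discriminate.
      * intros _ H; discriminate.
    + unfold phi; rewrite Elo, Ehi; simpl.
      pose proof (Hf u Hu). unfold Rabs; destruct Rcase_abs; lra.
Qed.
End F.

Definition anc (a b : nat * nat) : Prop :=
  (fst a <= fst b)%nat /\ Nat.div (snd b) (Nat.pow 2 (fst b - fst a)) = snd a.
Definition inc a b := ~ anc a b /\ ~ anc b a.
Fixpoint AC (l : list (nat * nat)) : Prop :=
  match l with nil => True | a :: r => (forall b, In b r -> inc a b) /\ AC r end.

Lemma pow2_nz n : Nat.pow 2 n <> 0%nat.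
Proof. apply Nat.pow_nonzero; lia. Qed.

Lemma anc_refl a : anc a a.
Proof. unfold anc. rewrite Nat.sub_diag. simpl. split; [lia|]. apply Nat.div_1_r. Qed.

Lemma anc_trans a b c : anc a b -> anc b c -> anc a c.
Proof.
  unfold anc. intros [H1 H2] [H3 H4]. split; [lia|].
  replace (fst c - fst a)%nat with ((fst c - fst b) + (fst b - fst a))%nat by lia.
  rewrite Nat.pow_add_r, <- Nat.Div0.div_div, H4; auto.
Qed.

Lemma anc_linear p k c : anc p c -> anc k c -> (fst p <= fst k)%nat -> anc p k.
Proof.
  unfold anc. intros [H1 H2] [H3 H4] H5. split; [lia|].
  rewrite <- H4, Nat.Div0.div_div, <- Nat.pow_add_r.
  replace (fst c - fst k + (fst k - fst p))%nat with (fst c - fst p)%nat by lia. auto.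
Qed.

Lemma anc_same a b : anc a b -> fst a = fst b -> a = b.
Proof.
  unfold anc. intros [_ H] E. rewrite E, Nat.sub_diag, Nat.pow_0_r in H.
  rewrite Nat.div_1_r in H. destruct a, b; simpl in *; subst; auto.
Qed.

Lemma anc_child0 d i : anc (d, i) (S d, 2 * i)%nat.
Proof.
  unfold anc; cbn [fst snd]. split; [lia|]. replace (S d - d)%nat with 1%nat by lia.
  rewrite Nat.pow_1_r. replace (2 * i)%nat with (i * 2)%nat by lia. apply Nat.div_mul; lia.
Qed.

Lemma anc_child1 d i : anc (d, i) (S d, S (2 * i))%nat.
Proof.
  unfold anc; cbn [fst snd]. split; [lia|]. replace (S d - d)%nat with 1%nat by lia.
  rewrite Nat.pow_1_r. replace (S (2 * i))%nat with (i * 2 + 1)%nat by lia.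
  rewrite Nat.div_add_l by lia. rewrite Nat.div_small by lia. lia.
Qed.

Lemma inc_sym a b : inc a b -> inc b a.
Proof. unfold inc; tauto. Qed.

Lemma inc_neq a b : inc a b -> a <> b.
Proof. intros [H _] ->. apply H, anc_refl. Qed.

Lemma child_inc k c p : anc k c -> fst c = S (fst k) -> inc k p -> inc c p.
Proof.
  intros Hkc Hd [H1 H2]. split.
  - intros Hcp. apply H1. eapply anc_trans; eauto.
  - intros Hpc. destruct (Nat.eq_dec (fst p) (fst c)) as [E|E].
    + apply anc_same in Hpc; auto. subst p. auto.
    + apply H2. apply (anc_linear p k c); auto. destruct Hpc. lia.
Qed.

Lemma AC_app l1 l2 : AC (l1 ++ l2) <-> AC l1 /\ AC l2 /\ (forall a b, In a l1 -> In b l2 -> inc a b).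
Proof.
  induction l1 as [|h r IH]; simpl.
  - split; [intros; repeat split; auto; contradiction|tauto].
  - rewrite IH. split.
    + intros (H1 & H2 & H3 & H4). split; [split|split]; auto.
      * intros b Hb. apply H1, in_or_app; auto.
      * intros a b [<-|Ha] Hb; auto. apply H1, in_or_app; auto.
    + intros ((H1 & H2) & H3 & H4). split; [|split; [|split]]; auto.
      intros b Hb. apply in_app_or in Hb as [Hb|Hb]; auto.
Qed.

Lemma AC_mem l a b : AC l -> In a l -> In b l -> a <> b -> ~ anc a b.
Proof.
  induction l as [|h r IH]; simpl; [tauto|].
  intros [H1 H2] [<-|Ha] [<-|Hb] Hne; try congruence.
  - apply H1; auto.
  - apply H1 in Ha. apply Ha.
  - apply IH; auto.
Qed.

Lemma NoDesc st J J2 cc : AC (map key st) -> In J st -> In J2 st ->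
  anc (key J) cc -> anc cc (key J2) -> (fst (key J) < fst cc)%nat -> False.
Proof.
  intros HA H1 H2 Ha Hb Hd.
  apply (AC_mem _ (key J) (key J2) HA); try (apply in_map; auto).
  - intros E. destruct Hb. rewrite <- E in H. lia.
  - eapply anc_trans; eauto.
Qed.

Lemma key_eqb_true a b : key_eqb a b = true <-> a = b.
Proof.
  unfold key_eqb. rewrite andb_true_iff, !Nat.eqb_eq. destruct a, b; simpl.
  split; [intros [-> ->]; auto|intros E; inversion E; auto].
Qed.

Lemma key_eqb_false a b : a <> b -> key_eqb a b = false.
Proof. intros H. destruct (key_eqb a b) eqn:E; auto. apply key_eqb_true in E. tauto. Qed.

Lemma replace_nokey k new l : (forall J, In J l -> key J <> k) -> replace_ival k new l = l.
Proof.
  induction l as [|h r IH]; simpl; auto. intros H.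
  rewrite key_eqb_false by (apply H; auto). rewrite IH; auto.
Qed.

Lemma replace_dec A J0 B new : (forall J, In J (A ++ B) -> key J <> key J0) ->
  replace_ival (key J0) new (A ++ J0 :: B) = A ++ new ++ B.
Proof.
  intros H. unfold replace_ival. rewrite flat_map_app. simpl.
  replace (key_eqb (key J0) (key J0)) with true by (symmetry; apply key_eqb_true; auto).
  fold (replace_ival (key J0) new A). fold (replace_ival (key J0) new B).
  rewrite !replace_nokey; auto; intros; apply H, in_or_app; auto.
Qed.

Definition NewSpec (L : R) (f : R -> R) (J0 : ival) (u : R) (c : bool) (q : R) (new : list ival) : Prop :=
  (exists J', new = J' :: nil /\ key J' = key J0 /\
       (c = false -> FI f J0 -> 0 <= u <= 1 -> inI J0 u ->
         FI f J' /\ Rabs (f u - q) + phi L J' <= phi L J0))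
  \/ (exists c1 c2, new = c1 :: c2 :: nil /\ key c1 = (S (dep J0), 2 * idx J0)%nat /\
       key c2 = (S (dep J0), S (2 * idx J0)) /\ qlo c1 = false /\ qhi c1 = false /\
       qlo c2 = false /\ qhi c2 = false /\
       (c = false -> FI f J0 -> 0 <= u <= 1 -> inI J0 u -> Rabs (f u - q) <= phi L J0)).

Section G.
Variables (L : R) (f : R -> R).
Hypothesis HL : 0 < L.
Hypothesis Hf : forall u, 0 <= u <= 1 -> 0 <= f u <= L.
Hypothesis Hlip : forall u v, 0 <= u <= 1 -> 0 <= v <= 1 -> Rabs (f u - f v) <= L * Rabs (u - v).

Definition SInv (st : list ival) : Prop :=
  AC (map key st) /\ forall J, In J st -> (3 <= dep J)%nat /\ bounded L J.

Lemma round_dec T st u c q k st' : SInv st -> round L T f st u c = (q, k, st') ->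
  (st' = st /\ k = (0, 0)%nat) \/
  (exists J0 A B new, st = A ++ J0 :: B /\ st' = A ++ new ++ B /\ k = key J0 /\
     icontains J0 u = true /\ (forall J, In J (A ++ B) -> key J <> key J0) /\
     Forall (bounded L) new /\ NewSpec L f J0 u c q new).
Proof.
  intros [HA HB] E. unfold round in E.
  destruct (find (fun J0 => icontains J0 u) st) as [J0|] eqn:Ef.
  - right. apply find_some in Ef as [Hin Hc].
    destruct (HB J0 Hin) as [Hd Hb].
    destruct (process_spec L f HL Hf Hlip T J0 u c st q k st' E Hd Hb) as (-> & new & -> & Hn & Hs).
    destruct (in_split _ _ Hin) as (A & B & ->).
    assert (Hk : forall J, In J (A ++ B) -> key J <> key J0).
    { intros J HJ. rewrite map_app in HA. simpl in HA. apply AC_app in HA as (HA1 & HA2 & HA3).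
      apply in_app_or in HJ as [HJ|HJ].
      - apply inc_neq, HA3; [apply in_map; auto| left; auto].
      - intros E'. destruct HA2 as [HA2 _]. apply (inc_neq (key J0) (key J)); auto.
        apply HA2, in_map; auto. }
    exists J0, A, B, new. repeat split; auto. apply replace_dec; auto.
  - left. inversion E; auto.
Qed.

Lemma SInv_step T st u c q k st' : SInv st -> round L T f st u c = (q, k, st') ->
  SInv st' /\ (forall J, In J st -> exists J2, In J2 st' /\ anc (key J) (key J2)).
Proof.
  intros HS E. destruct (round_dec T st u c q k st' HS E) as [[-> ->]|(J0 & A & B & new & -> & -> & -> & Hc & Hk & Hn & Hs)].
  { split; auto. intros J HJ. exists J; split; auto. apply anc_refl. }
  destruct HS as [HA HB].
  assert (HBn : forall J, In J new -> (3 <= dep J)%nat /\ bounded L J).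
  { intros J HJ. destruct (HB J0) as [Hd _]; [apply in_or_app; right; left; auto|].
    split; [|rewrite Forall_forall in Hn; auto].
    destruct Hs as [(J' & -> & Hkey & _)|(c1 & c2 & -> & K1 & K2 & _)].
    - destruct HJ as [<-|[]]. unfold key in Hkey. inversion Hkey. lia.
    - destruct HJ as [<-|[<-|[]]]; unfold key in *; inversion K1; inversion K2; lia. }
  split; [split|].
  - destruct Hs as [(J' & -> & Hkey & _)|(c1 & c2 & -> & K1 & K2 & _)].
    + rewrite map_app in *. simpl in *. rewrite Hkey. auto.
    + rewrite map_app in *. simpl in *. apply AC_app in HA as (HA1 & [HA2 HA3] & HA4).
      assert (Hc1 : anc (key J0) (key c1)) by (rewrite K1; apply anc_child0).
      assert (Hc2 : anc (key J0) (key c2)) by (rewrite K2; apply anc_child1).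
      assert (D1 : fst (key c1) = S (fst (key J0))) by (rewrite K1; reflexivity).
      assert (D2 : fst (key c2) = S (fst (key J0))) by (rewrite K2; reflexivity).
      apply AC_app. split; [auto|split].
      * simpl. split; [|split; auto].
        -- intros b [<-|Hb].
           ++ rewrite K1, K2. split; intros Ha.
              ** apply anc_same in Ha; simpl; auto. inversion Ha. lia.
              ** apply anc_same in Ha; simpl; auto. inversion Ha. lia.
           ++ eapply child_inc; eauto.
        -- intros b Hb. eapply child_inc; eauto.
      * intros a b Ha [<-|[<-|Hb]].
        -- apply inc_sym. eapply child_inc; eauto. apply inc_sym, HA4; auto. left; auto.
        -- apply inc_sym. eapply child_inc; eauto. apply inc_sym, HA4; auto. left; auto.
        -- apply HA4; auto. right; auto.
  - intros J HJ. apply in_app_or in HJ as [HJ|HJ]; [apply HB, in_or_app; auto|].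
    apply in_app_or in HJ as [HJ|HJ]; [auto|apply HB, in_or_app; right; right; auto].
  - intros J HJ. apply in_app_or in HJ as [HJ|[<-|HJ]].
    + exists J. split; [apply in_or_app; auto|apply anc_refl].
    + destruct Hs as [(J' & -> & Hkey & _)|(c1 & c2 & -> & K1 & K2 & _)].
      * exists J'. split; [apply in_or_app; right; apply in_or_app; left; left; auto|].
        rewrite Hkey; apply anc_refl.
      * exists c1. split; [apply in_or_app; right; apply in_or_app; left; left; auto|].
        rewrite K1; apply anc_child0.
    + exists J. split; [apply in_or_app; right; apply in_or_app; right; auto|apply anc_refl].
Qed.
End G.

Section H.
Variables (L : R) (T : nat) (f : R -> R) (x : nat -> R) (corr : nat -> bool).
Hypothesis HL : 0 < L.
Hypothesis Hf : forall u, 0 <= u <= 1 -> 0 <= f u <= L.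
Hypothesis Hlip : forall u v, 0 <= u <= 1 -> 0 <= v <= 1 -> Rabs (f u - f v) <= L * Rabs (u - v).
Hypothesis Hx : forall t, 0 <= x t <= 1.

Notation st n := (run L T f x corr n).
Notation kt t := (lies_in L T f x corr t).
Notation cr k := (correcting L T f x corr k).

Lemma run_S m : st (S m) = snd (round L T f (st m) (x (S m)) (corr (S m))).
Proof. simpl. destruct (round _ _ _ _ _ _) as [[? ?] ?]; reflexivity. Qed.

Lemma lies_S m : kt (S m) = snd (fst (round L T f (st m) (x (S m)) (corr (S m)))).
Proof. unfold lies_in. replace (S m - 1)%nat with m by lia.
  destruct (round _ _ _ _ _ _) as [[? ?] ?]; reflexivity. Qed.

Lemma guess_S m : guess L T f x corr (S m) = fst (fst (round L T f (st m) (x (S m)) (corr (S m)))).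
Proof. unfold guess. replace (S m - 1)%nat with m by lia.
  destruct (round _ _ _ _ _ _) as [[? ?] ?]; reflexivity. Qed.

Lemma AC_seq n a : AC (map (fun i => (3%nat, i)) (seq a n)).
Proof.
  revert a; induction n as [|n IH]; intros a; simpl; auto. split; auto.
  intros b Hb. apply in_map_iff in Hb as (j & <- & Hj). apply in_seq in Hj.
  split; intros Ha; apply anc_same in Ha; auto; inversion Ha; lia.
Qed.

Lemma SInv_all n : SInv L (st n).
Proof.
  induction n as [|n IH].
  - simpl. split.
    + unfold init_state. rewrite map_map. apply AC_seq.
    + intros J HJ. unfold init_state in HJ. apply in_map_iff in HJ as (i & <- & _).
      simpl. split; [lia|]. unfold bounded; simpl; lra.
  - rewrite run_S. destruct (round _ _ _ _ _ _) as [[q k] st'] eqn:E. simpl.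
    eapply SInv_step; eauto.
Qed.

Lemma Cov m n : (m <= n)%nat -> forall J, In J (st m) -> exists J2, In J2 (st n) /\ anc (key J) (key J2).
Proof.
  intros Hmn. induction Hmn as [|n Hmn IH]; intros J HJ.
  - exists J; split; auto; apply anc_refl.
  - destruct (IH J HJ) as (J1 & H1 & A1).
    rewrite run_S. destruct (round _ _ _ _ _ _) as [[q k] st'] eqn:E. simpl.
    destruct (SInv_step L f HL Hf Hlip T _ _ _ _ _ _ (SInv_all n) E) as [_ Hc].
    destruct (Hc J1 H1) as (J2 & H2 & A2). exists J2; split; auto. eapply anc_trans; eauto.
Qed.

Lemma kt_in s : kt (S s) = (0, 0)%nat \/ exists J, In J (st s) /\ key J = kt (S s).
Proof.
  rewrite lies_S. destruct (round _ _ _ _ _ _) as [[q k] st'] eqn:E. simpl.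
  destruct (round_dec L f HL Hf Hlip T _ _ _ _ _ _ (SInv_all s) E) as [[_ ->]|(J0 & A & B & new & -> & _ & -> & _)].
  - auto.
  - right. exists J0. split; auto. apply in_or_app; right; left; auto.
Qed.

Lemma correcting_uncorr k t : cr k = true -> (1 <= t <= T)%nat -> kt t = k -> corr t = false.
Proof.
  intros H Ht Hk. unfold correcting in H. apply andb_true_iff in H as [_ H].
  rewrite forallb_forall in H. unfold rounds in H. specialize (H t). rewrite in_seq in H.
  assert (H' : (negb (key_eqb (kt t) k) || negb (corr t)) = true) by (apply H; lia).
  rewrite Hk in H'. replace (key_eqb k k) with true in H' by (symmetry; apply key_eqb_true; auto).
  simpl in H'. destruct (corr t); auto.
Qed.

Lemma FInv n : (n <= T)%nat -> forall J, In J (st n) -> cr (key J) = true -> FI f J.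
Proof.
  induction n as [|n IH]; intros Hn J HJ Hc.
  - change (In J (init_state L)) in HJ. unfold init_state in HJ. apply in_map_iff in HJ as (i & <- & _).
    unfold correcting in Hc. simpl in Hc. discriminate.
  - revert HJ. rewrite run_S.
    pose proof (lies_S n) as Hk. pose proof (guess_S n) as Hq.
    destruct (round _ _ _ _ _ _) as [[q k] st'] eqn:E. simpl in *. intros HJ.
    destruct (round_dec L f HL Hf Hlip T _ _ _ _ _ _ (SInv_all n) E) as [[-> ->]|(J0 & A & B & new & Est & -> & -> & Hic & Hk' & Hn' & Hs)].
    + apply IH; auto; lia.
    + apply in_app_or in HJ as [HJ|HJ]; [apply IH; auto; [lia|rewrite Est; apply in_or_app; auto]|].
      apply in_app_or in HJ as [HJ|HJ]; [|apply IH; auto; [lia|rewrite Est; apply in_or_app; right; right; auto]].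
      destruct Hs as [(J' & -> & Hkey & Hsp)|(c1 & c2 & -> & K1 & K2 & L1 & H1 & L2 & H2 & _)].
      * destruct HJ as [<-|[]].
        assert (Hc0 : corr (S n) = false).
        { apply (correcting_uncorr (key J0)); [rewrite <- Hkey; auto|lia|auto]. }
        apply Hsp; auto.
        -- apply IH; [lia| rewrite Est; apply in_or_app; right; left; auto| rewrite <- Hkey; auto].
        -- apply icontains_inI; auto.
      * destruct HJ as [<-|[<-|[]]]; unfold FI; rewrite ?L1, ?H1, ?L2, ?H2; repeat split; intros; discriminate.
Qed.
End H.

Fixpoint sumR (g : ival -> R) (l : list ival) : R :=
  match l with nil => 0 | a :: r => g a + sumR g r end.

Lemma sumR_app g l1 l2 : sumR g (l1 ++ l2) = sumR g l1 + sumR g l2.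
Proof. induction l1; simpl; [lra|rewrite IHl1; lra]. Qed.

Lemma sumR_ext g1 g2 l : (forall J, In J l -> g1 J = g2 J) -> sumR g1 l = sumR g2 l.
Proof. induction l; simpl; intros H; auto. rewrite H, IHl; auto. Qed.

Lemma sumR_nonneg g l : (forall J, In J l -> 0 <= g J) -> 0 <= sumR g l.
Proof. induction l; simpl; intros H; [lra|]. pose proof (H a (or_introl eq_refl)).
  assert (0 <= sumR g l) by (apply IHl; auto). lra. Qed.

Lemma sumR_zero g l : (forall J, In J l -> g J = 0) -> sumR g l = 0.
Proof. induction l; simpl; intros H; auto. rewrite H, IHl; auto; lra. Qed.

Lemma fold_Rplus_init c l : fold_right Rplus c l = c + fold_right Rplus 0 l.
Proof. induction l; simpl; [lra|rewrite IHl; lra]. Qed.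

Lemma phi_nonneg L J : 0 < L -> 0 <= phi L J.
Proof.
  intros HL. pose proof (ilen_pos J). unfold phi.
  pose proof (Rmax_r (Yhi J - Ylo J) (4 * L * ilen J)).
  assert (0 < 4 * L * ilen J) by (apply Rmult_lt_0_compat; lra).
  destruct (qlo J), (qhi J); simpl; lra.
Qed.

Lemma phi_fresh L J : qlo J = false -> qhi J = false -> phi L J = 6 * L.
Proof. intros H1 H2. unfold phi. rewrite H1, H2. simpl. lra. Qed.

Section K.
Variables (L : R) (T : nat) (f : R -> R) (x : nat -> R) (corr : nat -> bool).
Hypothesis HL : 0 < L.
Hypothesis Hf : forall u, 0 <= u <= 1 -> 0 <= f u <= L.
Hypothesis Hlip : forall u v, 0 <= u <= 1 -> 0 <= v <= 1 -> Rabs (f u - f v) <= L * Rabs (u - v).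
Hypothesis Hx : forall t, 0 <= x t <= 1.

Notation st n := (run L T f x corr n).
Notation kt t := (lies_in L T f x corr t).
Notation cr k := (correcting L T f x corr k).

Definition had (k : nat * nat) (n : nat) : bool :=
  existsb (fun s => key_eqb (kt s) k && corr s) (seq 1 n).

Definition psi n J := (if cr (key J) then phi L J else 0) + (if had (key J) n then 12 * L else 0).
Definition Psi n := sumR (psi n) (st n).

Lemma had_S k n : had k (S n) = had k n || (key_eqb (kt (S n)) k && corr (S n)).
Proof. unfold had. rewrite seq_S, existsb_app. simpl. rewrite orb_false_r. reflexivity. Qed.

Lemma had_true k n : had k n = true -> exists s, (1 <= s <= n)%nat /\ kt s = k /\ corr s = true.
Proof.
  unfold had. intros H. apply existsb_exists in H as (s & Hs & H). apply in_seq in Hs.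
  apply andb_true_iff in H as [H1 H2]. apply key_eqb_true in H1. exists s. split; [lia|auto].
Qed.

Lemma had_intro k n s : (1 <= s <= n)%nat -> kt s = k -> corr s = true -> had k n = true.
Proof.
  intros Hs Hk Hc. unfold had. apply existsb_exists. exists s. split; [apply in_seq; lia|].
  rewrite Hk, Hc. replace (key_eqb k k) with true by (symmetry; apply key_eqb_true; auto). auto.
Qed.

Lemma psi_nonneg n J : 0 <= psi n J.
Proof. unfold psi. pose proof (phi_nonneg L J HL). destruct (cr _), (had _ _); lra. Qed.

Lemma Psi0 : Psi 0 = 0.
Proof.
  unfold Psi. apply sumR_zero. intros J HJ. change (In J (init_state L)) in HJ.
  unfold init_state in HJ. apply in_map_iff in HJ as (i & <- & _). unfold psi, correcting. simpl. lra.
Qed.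

Lemma C2 n J0 cc : In J0 (st n) -> anc (key J0) cc -> (fst (key J0) < fst cc)%nat ->
  kt (S n) = key J0 -> had cc (S n) = false.
Proof.
  intros HJ0 Ha Hd Hk. rewrite had_S, Hk.
  rewrite (key_eqb_false (key J0) cc) by (intros E; rewrite E in Hd; lia).
  rewrite andb_false_l, orb_false_r.
  destruct (had cc n) eqn:Eh; auto. exfalso.
  apply had_true in Eh as (s & Hs & Hks & _). destruct s as [|s]; [lia|].
  destruct (kt_in L T f x corr HL Hf Hlip s) as [E|(J & HJ & Hkey)].
  - rewrite Hks in E. rewrite E in Hd. simpl in Hd. lia.
  - destruct (Cov L T f x corr HL Hf Hlip s n ltac:(lia) J HJ) as (J2 & H2 & A2).
    rewrite Hkey, Hks in A2.
    destruct (SInv_all L T f x corr HL Hf Hlip n) as [HA _].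
    apply (NoDesc (st n) J0 J2 cc HA HJ0 H2 Ha A2 Hd).
Qed.

Lemma C1 n J0 C : In J0 (st n) -> In C (st (S n)) -> anc (key J0) (key C) ->
  (fst (key J0) < fst (key C))%nat -> (3 <= dep J0)%nat ->
  forall s, (S n < s)%nat -> kt s <> key J0.
Proof.
  intros HJ0 HC Ha Hd Hd3 s Hs Hk. destruct s as [|s]; [lia|].
  destruct (kt_in L T f x corr HL Hf Hlip s) as [E|(J & HJ & Hkey)].
  - rewrite Hk in E. unfold key in E. inversion E. lia.
  - destruct (Cov L T f x corr HL Hf Hlip (S n) s ltac:(lia) C HC) as (J2 & H2 & A2).
    destruct (SInv_all L T f x corr HL Hf Hlip s) as [HA _].
    rewrite Hk in Hkey.
    apply (NoDesc (st s) J J2 (key C) HA HJ H2); auto; rewrite Hkey; auto.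
Qed.

Lemma step_ineq n : (S n <= T)%nat ->
  (if cr (kt (S n)) then Rabs (f (x (S n)) - guess L T f x corr (S n)) else 0) + Psi (S n)
  <= Psi n + (if corr (S n) then 12 * L else 0).
Proof.
  intros Hn. unfold Psi.
  pose proof (lies_S L T f x corr n) as Hk. pose proof (guess_S L T f x corr n) as Hq.
  pose proof (run_S L T f x corr n) as Hr.
  destruct (round _ _ _ _ _ _) as [[q k] st'] eqn:E. cbn [fst snd] in Hk, Hq, Hr.
  rewrite Hr, Hq.
  pose proof (SInv_all L T f x corr HL Hf Hlip n) as HS.
  destruct (round_dec L f HL Hf Hlip T _ _ _ _ _ _ HS E) as [[-> ->]|(J0 & A & B & new & Est & -> & -> & Hic & Hk' & Hn' & Hs)].
  - rewrite Hk. replace (cr (0, 0)%nat) with false by reflexivity.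
    rewrite (sumR_ext (psi (S n)) (psi n)).
    + destruct (corr (S n)); lra.
    + intros J HJ. unfold psi. rewrite had_S, Hk.
      rewrite (key_eqb_false _ (key J)); [rewrite andb_false_l, orb_false_r; auto|].
      destruct HS as [_ HB]. destruct (HB J HJ) as [Hd _]. intros E'. unfold key in E'. inversion E'. lia.
  - rewrite Est, !sumR_app. simpl.
    assert (Hoth : forall J, In J (A ++ B) -> psi (S n) J = psi n J).
    { intros J HJ. unfold psi. rewrite had_S, Hk.
      rewrite (key_eqb_false (key J0) (key J)); [rewrite andb_false_l, orb_false_r; auto|].
      intros E'. apply (Hk' J HJ). auto. }
    rewrite (sumR_ext (psi (S n)) (psi n) A) by (intros; apply Hoth, in_or_app; auto).
    rewrite (sumR_ext (psi (S n)) (psi n) B) by (intros; apply Hoth, in_or_app; auto).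
    assert (HJ0 : In J0 (st n)) by (rewrite Est; apply in_or_app; right; left; auto).
    destruct HS as [HA HB]. destruct (HB J0 HJ0) as [Hd3 _].
    assert (Hspec : cr (key J0) = true -> corr (S n) = false /\ FI f J0 /\ inI J0 (x (S n))).
    { intros Hc. split; [apply (correcting_uncorr L T f x corr (key J0)); auto; lia|].
      split; [apply (FInv L T f x corr HL Hf Hlip Hx n); auto; lia|apply icontains_inI; auto]. }
    assert (Hpos : 0 <= phi L J0) by (apply phi_nonneg; auto).
    rewrite Hk. unfold psi at 2.
    destruct Hs as [(J' & -> & Hkey & Hsp)|(c1 & c2 & -> & K1 & K2 & L1 & H1 & L2 & H2 & Hsp)].
    + simpl. unfold psi. rewrite Hkey, had_S, Hk.
      replace (key_eqb (key J0) (key J0)) with true by (symmetry; apply key_eqb_true; auto).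
      destruct (cr (key J0)) eqn:Hc.
      * destruct (Hspec eq_refl) as (Hc0 & FJ & Iu). rewrite Hc0.
        destruct (Hsp Hc0 FJ (Hx _) Iu) as [_ Hl]. destruct (had (key J0) n); simpl; lra.
      * destruct (had (key J0) n), (corr (S n)); simpl; lra.
    + simpl. unfold psi.
      assert (Ha1 : anc (key J0) (key c1)) by (rewrite K1; apply anc_child0).
      assert (Ha2 : anc (key J0) (key c2)) by (rewrite K2; apply anc_child1).
      assert (Hd1 : (fst (key J0) < fst (key c1))%nat) by (rewrite K1; simpl; lia).
      assert (Hd2 : (fst (key J0) < fst (key c2))%nat) by (rewrite K2; simpl; lia).
      rewrite (C2 n J0 (key c1)), (C2 n J0 (key c2)); auto.
      rewrite (phi_fresh L c1), (phi_fresh L c2); auto.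
      destruct (cr (key c1) || cr (key c2)) eqn:Hcc.
      * assert (Hcor : corrupted L T f x corr (key J0) = true).
        { apply orb_true_iff in Hcc as [Hc|Hc]; unfold correcting in Hc;
            apply andb_true_iff in Hc as [Hc _]; apply andb_true_iff in Hc as [_ Hc];
            [rewrite K1 in Hc|rewrite K2 in Hc]; cbn [fst snd Nat.pred] in Hc;
            [rewrite Nat.div2_double in Hc|rewrite Nat.div2_succ_double in Hc]; exact Hc. }
        change (had (key J0) T = true) in Hcor.
        apply had_true in Hcor as (s & Hs & Hks & Hcs).
        assert (Hc0 : cr (key J0) = false).
        { destruct (cr (key J0)) eqn:Hc; auto.
          rewrite (correcting_uncorr L T f x corr (key J0) s Hc) in Hcs; auto. }
        assert (Hsle : (s <= S n)%nat).
        { destruct (Nat.le_gt_cases s (S n)) as [|Hgt]; auto. exfalso.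
          apply (C1 n J0 c1 HJ0) with s; auto.
          rewrite Hr. apply in_or_app; right; left; auto. }
        assert (Hh : had (key J0) n || corr (S n) = true).
        { destruct (Nat.eq_dec s (S n)) as [->|Hne]; [rewrite Hcs; apply orb_true_r|].
          rewrite (had_intro (key J0) n s); auto. lia. }
        rewrite Hc0.
        destruct (cr (key c1)), (cr (key c2)), (had (key J0) n), (corr (S n)); simpl in *; try discriminate; lra.
      * apply orb_false_iff in Hcc as [-> ->].
        destruct (cr (key J0)) eqn:Hc.
        -- destruct (Hspec eq_refl) as (Hc0 & FJ & Iu).
           pose proof (Hsp Hc0 FJ (Hx _) Iu). destruct (had (key J0) n), (corr (S n)); lra.
        -- destruct (had (key J0) n), (corr (S n)); lra.
Qed.

Definition lossf t := if cr (kt t) then Rabs (f (x t) - guess L T f x corr t) else 0.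

Lemma tele m : (m <= T)%nat ->
  fold_right Rplus 0 (map lossf (seq 1 m)) + Psi m <= Psi 0 + 12 * L * INR (length (filter corr (seq 1 m))).
Proof.
  induction m as [|m IH]; intros Hm.
  - simpl. lra.
  - rewrite seq_S, map_app, fold_right_app, filter_app, length_app. simpl.
    rewrite fold_Rplus_init, plus_INR. pose proof (IH ltac:(lia)).
    pose proof (step_ineq m Hm). unfold lossf in *.
    destruct (corr (S m)); simpl; lra.
Qed.

Lemma final : correcting_loss L T f x corr <= 12 * L * INR (num_corruptions T corr).
Proof.
  pose proof (tele T (le_n T)). rewrite Psi0 in H.
  assert (0 <= Psi T) by (apply sumR_nonneg; intros; apply psi_nonneg).
  unfold correcting_loss, num_corruptions, rounds. fold lossf. lra.
Qed.
End K.

Theorem lemma26 :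
  exists K : R, 0 < K /\
  forall (L : R) (T C : nat) (f : R -> R) (x : nat -> R) (corr : nat -> bool),
    0 < L -> (2 <= T)%nat ->
    (forall u, 0 <= u <= 1 -> 0 <= f u <= L) ->
    (forall u v, 0 <= u <= 1 -> 0 <= v <= 1 -> Rabs (f u - f v) <= L * Rabs (u - v)) ->
    (forall t, 0 <= x t <= 1) ->
    (num_corruptions T corr <= C)%nat ->
    correcting_loss L T f x corr <= K * L * INR C.
Proof.
  exists 12. split; [lra|]. intros L T C f x corr HL _ Hf Hlip Hx HC.
  eapply Rle_trans. apply final; auto.
  apply Rmult_le_compat_l; [lra|]. apply le_INR; auto.
Qed.
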